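(* Consider an exponential bottleneck game on a graph $G$, a Nash-routing $\mathbf{p}=[p_1,\dots,p_N]$ and a routing $\mathbf{p}^*=[p_1^*,\dots,p_N^*]$ of minimum social cost $C^*=C(\mathbf{p}^* )=M$, and suppose $L^*\ge2$. Let $\hat C=\lceil\max_i\log_2\widetilde C_i(\mathbf{p})\rceil$ and $l_1^*=\log_2(L^*-1)$. If $k$ is a positive integer with $\hat C-k>8M+l_1^*+2$, then every non-empty set of players $S\subseteq S^{(1)}\cup S^{(2)}\cup\dots\cup S^{(k)}$ is not self-sufficient in $\mathbf{p}$.
   Context: Player $\pi_i$ has a strategy set $\mathcal{P}_i$ of paths from $u_i$ to $v_i$; a routing is $\mathbf{p}=[p_1,\dots,p_N]$ with $p_i\in\mathcal{P}_i$. $C_e(\mathbf{p})$ is the number of paths in $\mathbf{p}$ using edge $e$; social cost $C(\mathbf{p})=\max_eC_e(\mathbf{p})$; player cost $\widetilde C_i(\mathbf{p})=\sum_{e\in p_i}2^{C_e(\mathbf{p})}$. A Nash-routing is one in which no player can strictly lower its cost by unilaterally switching to another path in its strategy set. $L^*$ is the maximum length of a path in $\mathbf{p}^*$. Stage $i$ ($1\le i\le\hat C$): $S^{(i)}$ is the set of players $\pi_j$ with $2^{\hat C-i}+2\le\widetilde C_j(\mathbf{p})\le 2^{\hat C-i+1}$. Self-sufficiency: for a set $S$ of players and $\pi_j\in S$, let $\mathbf{q}_j$ be the routing consisting only of the players in $S$, where every player of $S$ other than $\pi_j$ uses its path from $\mathbf{p}$ and $\pi_j$ uses $p_j^*$ (congestions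 in $\mathbf{q}_j$ count only these paths). $S$ is self-sufficient in $\mathbf{p}$ if for every $\pi_j\in S$, $\sum_{e\in p_j^*}2^{C_e(\mathbf{q}_j)}\ge\widetilde C_j(\mathbf{p})$. *)

(* Defs.v *)
From mathcomp Require Import all_boot.
From Stdlib Require Import Reals.

Set Implicit Arguments.
Unset Strict Implicit.
Unset Printing Implicit Defensive.

Fixpoint is_walk (V E : Type) (src tgt : E -> V) (u w : V) (s : seq E) : Prop :=
  match s with
  | [::] => u = w
  | e :: s' => src e = u /\ is_walk src tgt (tgt e) w s'
  end.

Definition is_path (V : eqType) (E : Type) (src tgt : E -> V) (u w : V)
  (s : seq E) : Prop :=
  is_walk src tgt u w s /\ uniq (u :: map tgt s).

Definition cong (E : finType) (N : nat) (r : 'I_N -> seq E) (e : E) : nat :=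
  #|[pred i : 'I_N | e \in r i]|.

Definition cong_in (E : finType) (N : nat) (S : {set 'I_N})
  (r : 'I_N -> seq E) (e : E) : nat :=
  #|[pred i : 'I_N | (i \in S) && (e \in r i)]|.

Definition social_cost (E : finType) (N : nat) (r : 'I_N -> seq E) : nat :=
  \max_(e : E) cong r e.

Definition pcost (E : finType) (N : nat) (r : 'I_N -> seq E) (i : 'I_N) : nat :=
  \sum_(e <- r i) 2 ^ cong r e.

Definition update (E : Type) (N : nat) (r : 'I_N -> seq E) (i : 'I_N)
  (q : seq E) : 'I_N -> seq E :=
  fun j => if j == i then q else r j.

Definition is_routing (E : Type) (N : nat) (Pset : 'I_N -> seq E -> Prop)
  (r : 'I_N -> seq E) : Prop :=
  forall i, Pset i (r i).

Definition is_nash (E : finType) (N : nat) (Pset : 'I_N -> seq E -> Prop)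
  (r : 'I_N -> seq E) : Prop :=
  is_routing Pset r /\
  forall i q, Pset i q -> pcost r i <= pcost (update r i q) i.

Definition is_optimal (E : finType) (N : nat) (Pset : 'I_N -> seq E -> Prop)
  (r : 'I_N -> seq E) : Prop :=
  is_routing Pset r /\
  forall r', is_routing Pset r' -> social_cost r <= social_cost r'.

Definition max_len (E : Type) (N : nat) (r : 'I_N -> seq E) : nat :=
  \max_(i < N) size (r i).

Definition self_sufficient (E : finType) (N : nat) (S : {set 'I_N})
  (p pstar : 'I_N -> seq E) : Prop :=
  forall j, j \in S ->
    pcost p j <= \sum_(e <- pstar j) 2 ^ cong_in S (update p j (pstar j)) e.

Definition log2 (x : R) : R := (ln x / ln 2)%R.

(* ceiling: - floor (- x);  Int_part is the floor *)
Definition Rceil (x : R) : Z := (- Int_part (- x))%Z.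

(* hat C = ceil (max_i log2 ~C_i(p)).  All log2 of costs are >= 0 (costs are
   naturals), so folding Rmax from 0 gives the maximum when N >= 1. *)
Definition hatC (E : finType) (N : nat) (p : 'I_N -> seq E) : Z :=
  Rceil (\big[Rmax/0%R]_(i < N) log2 (INR (pcost p i))).

Definition in_stage (E : finType) (N : nat) (p : 'I_N -> seq E) (i : nat)
  (j : 'I_N) : Prop :=
  (1 <= i)%N /\ (Z.of_nat i <= hatC p)%Z /\
  (powerRZ 2 (hatC p - Z.of_nat i) + 2 <= INR (pcost p j))%R /\
  (INR (pcost p j) <= powerRZ 2 (hatC p - Z.of_nat i + 1))%R.

(* Main.v *)
Require Import Defs.
From mathcomp Require Import all_boot zify.
Lemma powE m n : Nat.pow m n = expn m n.
Proof. elim: n => //= n IH. by rewrite expnS IH. Qed.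

Lemma exch (E:finType) N (S:{set 'I_N}) (s:'I_N -> seq E) (h:E->nat):
  (forall j, j \in S -> uniq (s j)) ->
  (\sum_(j in S) \sum_(e <- s j) h e = \sum_e cong_in S s e * h e)%N.
Proof.
move=> Hu.
transitivity (\sum_(j in S) \sum_(e | e \in s j) h e)%N.
  by apply: eq_bigr => j Hj; rewrite big_uniq ?Hu.
rewrite (exchange_big_dep xpredT) //=.
apply: eq_bigr => e _.
by rewrite /cong_in -sum_nat_const; apply: eq_bigl => i.
Qed.

Lemma sum_const_seq (E:Type) (s : seq E) (c : nat) :
  (\sum_(e <- s) c = size s * c)%N.
Proof. elim: s => [|x s IH]; first by rewrite big_nil.
by rewrite big_cons IH mulSn. Qed.

Lemma cong_upd (E:finType) N (S:{set 'I_N}) (p : 'I_N -> seq E) j q e :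
  (cong_in S (update p j q) e <= cong_in S p e + 1)%N.
Proof.
rewrite /cong_in.
apply: (@leq_trans #|[predU [pred i : 'I_N | (i \in S) && (e \in p i)] & pred1 j]|).
  apply: subset_leq_card; apply/subsetP => i; rewrite !inE /update.
  by case: (i == j); rewrite ?orbT ?orbF.
set A := [pred i : 'I_N | (i \in S) && (e \in p i)].
by rewrite -(card1 j) -(cardUI A (pred1 j)) leq_addr.
Qed.

Lemma core (E:finType) N (S:{set 'I_N}) (p ps : 'I_N -> seq E) (M L T : nat):
 (forall j, j\in S -> uniq (p j)) -> (forall j, j \in S -> uniq (ps j)) ->
 (forall j, j\in S -> size (ps j) <= L)%N ->
 (forall e, cong_in S ps e <= M)%N -> T = (4*M)%N ->
 (forall e, cong_in S p e <= cong p e)%N ->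
 (forall j, pcost p j = \sum_(e <- p j) 2 ^ cong p e)%N ->
 (forall j, j \in S -> pcost p j <= \sum_(e <- ps j) 2 ^ cong_in S (update p j (ps j)) e)%N ->
 (\sum_(j in S) pcost p j <= #|S| * (2^T * L) * 2)%N.
Proof.
move=> Hup Hups HL HM HT Hc Hpc Hss.
pose c e := cong_in S p e.
pose hi e := if (T <= c e)%N then (2^(c e + 1))%N else 0%N.
have S1 : forall j, j \in S -> (pcost p j <= 2^T * L + \sum_(e <- ps j) hi e)%N.
  move=> j Hj; apply: (leq_trans (Hss j Hj)).
  apply: (@leq_trans (\sum_(e <- ps j) (2^T + hi e))%N).
    apply: leq_sum => e _.
    apply: (@leq_trans (2 ^ (c e + 1))%N); first by rewrite leq_exp2l // cong_upd.
    rewrite /hi; case: (leqP T (c e)) => H; first by rewrite leq_addl.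
    by rewrite addn0 leq_exp2l // addn1.
  rewrite big_split /= sum_const_seq leq_add2r mulnC leq_mul2l HL ?orbT //.
have S2 : (\sum_(j in S) pcost p j <= #|S| * (2^T * L) + \sum_e cong_in S ps e * hi e)%N.
  rewrite -exch // -sum_nat_const -big_split /=.
  by apply: leq_sum.
have S3 : (2 * \sum_e cong_in S ps e * hi e <= \sum_(j in S) pcost p j)%N.
  apply: (@leq_trans (\sum_e c e * 2 ^ c e)%N).
    rewrite big_distrr /=; apply: leq_sum => e _.
    rewrite /hi; case: (leqP T (c e)) => H; last by rewrite muln0.
    rewrite expnD expn1; have := HM e; move: H; rewrite HT.
    move: (2 ^ c e) (c e) (cong_in S ps e) => x a b; nia.
  rewrite -exch //; apply: leq_sum => j Hj.
  by rewrite Hpc; apply: leq_sum => e _; rewrite leq_exp2l.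
lia.
Qed.
From Stdlib Require Import Reals Lra.
From Stdlib Require ZArith.

Lemma INR_expn n : INR (expn 2 n) = (2 ^ n)%R.
Proof. by rewrite -powE pow_INR. Qed.

Lemma pow_exp n : (2 ^ n)%R = exp (INR n * ln 2).
Proof. by rewrite -Rpower_pow; [|lra]. Qed.

Lemma ln2_pos : (0 < ln 2)%R.
Proof. rewrite -ln_1; apply: ln_increasing; lra. Qed.

Lemma log2_ge0 x : (1 <= x)%R -> (0 <= log2 x)%R.
Proof.
move=> H; rewrite /log2. have := ln2_pos => H2.
case: (Rle_lt_or_eq_dec _ _ H) => H1.
  have : (0 < ln x)%R by rewrite -ln_1; apply: ln_increasing; lra.
  move=> H3; apply: Rlt_le; apply: Rdiv_lt_0_compat => //.
by rewrite -H1 ln_1; lra.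
Qed.

Lemma real_part (d M A : nat) : (1 <= A)%N ->
  (INR d > 8*INR M + log2 (INR A) + 2)%R -> (expn 2 (8*M+2) * A < expn 2 d)%N.
Proof.
move=> HA Hg. apply/ltP; apply: INR_lt.
rewrite mult_INR !INR_expn !pow_exp.
have HA' : (0 < INR A)%R by apply: lt_0_INR; apply/ltP.
rewrite -{1}(exp_ln _ HA') -exp_plus; apply: exp_increasing.
have H2 := ln2_pos.
have E : (log2 (INR A) * ln 2 = ln (INR A))%R by rewrite /log2; field; lra.
have := Rmult_lt_compat_r (ln 2) _ _ H2 Hg.
rewrite !Rmult_plus_distr_r E plus_INR mult_INR.
replace (INR 8) with 8%R by (simpl; lra). replace (INR 2) with 2%R by (simpl; lra). lra.
Qed.

Theorem lemma5 (V E : finType) (src tgt : E -> V) (N : nat)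
  (u w : 'I_N -> V) (Pset : 'I_N -> seq E -> Prop)
  (HP : forall i q, Pset i q -> is_path src tgt (u i) (w i) q)
  (p pstar : 'I_N -> seq E)
  (Hnash : is_nash Pset p) (Hopt : is_optimal Pset pstar)
  (M : nat) (HM : M = social_cost pstar)
  (HL : (2 <= max_len pstar)%N)
  (k : nat) (Hk : (0 < k)%N)
  (Hgap : (IZR (hatC p - Z.of_nat k) >
           8 * INR M + log2 (INR (max_len pstar - 1)) + 2)%R)
  (S : {set 'I_N}) (HS0 : S != set0)
  (HS : forall j, j \in S -> exists i, (1 <= i <= k)%N /\ in_stage p i j) :
  ~ self_sufficient S p pstar.
Proof.
move=> Hss.
have Huniq : forall i q, Pset i q -> uniq q.
  by move=> i q /HP [_ /= /andP[_ /map_uniq]].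
case: Hnash => Hpr _. case: Hopt => Hsr _.
set L := max_len pstar in HL Hgap.
have HsL : forall j, (size (pstar j) <= L)%N.
  by move=> j; rewrite /L /max_len; apply: (leq_bigmax j).
have Hsub : forall (r : 'I_N -> seq E) e, (cong_in S r e <= cong r e)%N.
  move=> r e; apply: subset_leq_card; apply/subsetP => i.
  by rewrite !unfold_in /= => /andP[].
have HcM : forall e, (cong_in S pstar e <= M)%N.
  move=> e; apply: leq_trans (Hsub _ e) _.
  by rewrite HM /social_cost; apply: (leq_bigmax e).
have Hpc : forall j, pcost p j = (\sum_(e <- p j) expn 2 (cong p e))%N.
  by move=> j; rewrite /pcost; apply: eq_bigr => e _; exact: powE.
have Hss' : forall j, j \in S -> (pcost p j <= \sum_(e <- pstar j)
      expn 2 (cong_in S (update p j (pstar j)) e))%N.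
  move=> j Hj; apply: leq_trans (Hss j Hj) _.
  by apply: leq_sum => e _; rewrite powE.
have Hcore := @core E N S p pstar M L (4*M)%N (fun j _ => Huniq _ _ (Hpr j)) (fun j _ => Huniq _ _ (Hsr j))
  (fun j _ => HsL j) HcM (erefl (4*M)%N) (Hsub p) Hpc Hss'.
have HM1 : (1 <= M)%N.
  have [i Hi] : exists i, (2 <= size (pstar i))%N.
    case: (boolP [exists i, 2 <= size (pstar i)]) => [/existsP//|/existsPn H].
    have : (L <= 1)%N by apply/bigmax_leqP => i _; rewrite leqNgt H.
    by rewrite leqNgt HL.
  case E0: (pstar i) Hi => [|e s] //= _.
  rewrite HM /social_cost; apply: leq_trans (leq_bigmax e).
  rewrite /cong; apply: (@leq_trans #|pred1 i|); first by rewrite card1.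
  apply: subset_leq_card; apply/subsetP => x; rewrite unfold_in /= => /eqP ->.
  by rewrite unfold_in /= E0 mem_head.
have HL1 : (1 <= L - 1)%N by lia.
have HL1R : (1 <= INR (L - 1))%R by have := le_INR 1 (L - 1) (ltac:(apply/leP; exact HL1)).
have Hlog := log2_ge0 _ HL1R.
have HMR := pos_INR M.
have Hk2 : (Z.of_nat k + 2 < hatC p)%Z.
  have : (IZR 2 < IZR (hatC p - Z.of_nat k))%R by lra.
  move/lt_IZR; lia.
pose d := Z.to_nat (hatC p - Z.of_nat k).
have Hd : Z.of_nat d = (hatC p - Z.of_nat k)%Z by rewrite /d Znat.Z2Nat.id; lia.
have Hgd : (INR d > 8*INR M + log2 (INR (L-1)) + 2)%R by rewrite INR_IZR_INZ Hd.
have Hr := real_part _ _ _ HL1 Hgd.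
have Hlow : forall j, j \in S -> (expn 2 d <= pcost p j)%N.
  move=> j /HS [i [/andP[Hi1 Hik] [_ [_ [Hpw _]]]]].
  have Em : (hatC p - Z.of_nat i = Z.of_nat (d + (k - i)))%Z.
    rewrite Znat.Nat2Z.inj_add Hd; lia.
  rewrite Em -pow_powerRZ in Hpw.
  apply: (@leq_trans (expn 2 (d + (k-i)))); first by rewrite leq_exp2l // leq_addr.
  apply/leP; apply: INR_le; rewrite INR_expn; lra.
have Hsum : (#|S| * expn 2 d <= \sum_(j in S) pcost p j)%N.
  by rewrite -sum_nat_const; apply: leq_sum.
have HS1 : (0 < #|S|)%N by rewrite card_gt0.
have H2 : (expn 2 d <= expn 2 (4*M) * L * 2)%N.
  have := leq_trans Hsum Hcore.
  by rewrite -!mulnA leq_pmul2l // !mulnA.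
have H16 : (expn 2 4 <= expn 2 (4*M))%N by rewrite leq_exp2l //; lia.
have E8 : expn 2 (8*M+2) = (expn 2 (4*M) * expn 2 (4*M) * 4)%N.
  rewrite (_ : 8*M+2 = 4*M + 4*M + 2)%N; last lia.
  by rewrite (expnD 2 (4*M + 4*M) 2) (expnD 2 (4*M) (4*M)).
move: Hr H2 H16; rewrite E8; move: (expn 2 (4*M)) (expn 2 d) => x y.
rewrite (_ : expn 2 4 = 16)%N //.
nia.
Qed.
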